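(* Let $E$ be a finite set and let $\mathcal{Q}\subseteq 2^E$ be a weakly Rayleigh set-system. Then $\mathcal{Q}$ is a convex delta-matroid.
   Context: For a function $\omega:2^E\to[0,\infty)$, not identically zero, let $\mathbf{y}=\{y_e: e\in E\}$ be commuting indeterminates, $\mathbf{y}^S=\prod_{e\in S}y_e$, and $Z(\omega;\mathbf{y})=\sum_{S\subseteq E}\omega(S)\mathbf{y}^S$. For a multiaffine polynomial $Z$ write $Z^e=Z|_{y_e=0}$, $Z_e=\partial Z/\partial y_e$, $Z_{ef}=\partial^2 Z/\partial y_e\partial y_f$, and $\Delta Z\{e,f\}=Z_eZ_f-Z_{ef}Z$. $Z$ (or $\omega$) is Rayleigh if $\Delta Z\{e,f\}(\mathbf{y})\ge 0$ for all distinct $e,f\in E$ and all $\mathbf{y}$ with every $y_c>0$ (equivalently, under the probability measure $\mu(S)\propto\omega(S)\mathbf{y}^S$, the indicator variables of $e\in S$ and $f\in S$ have nonpositive covariance). The support is $\mathrm{Supp}(\omega)=\{S:\omega(S)>0\}$. A set-system $\mathcal{Q}\subseteq 2^E$ is weakly Rayleigh if there is a nonnegative $\omega$ with $\mathrm{Supp}(\omega)=\mathcal{Q}$ and $Z(\omega;\mathbf{y})$ Rayleigh. $\mathcal{Q}$ is convex if $S\subseteq T\subseteq S'$ with $S,S'\in\mathcal{Q}$ implies $T\in\mathcal{Q}$. $\mathcal{Q}$ is a delta-matroid if for all $A,B\in\mathcal{Q}$ and $e\in A\triangle B$ there is $f\in A\triangle B$ (possibly $f=e$) with $A\triangle\{e,f\}\in\mathcal{Q}$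 ($\triangle$ = symmetric difference). *)

(* Defs.v *)
From HB Require Import structures.
From mathcomp Require Import all_boot all_order all_algebra.
From mathcomp Require Import reals.
Set Implicit Arguments. Unset Strict Implicit. Unset Printing Implicit Defensive.
Import Order.TTheory GRing.Theory Num.Theory.
Local Open Scope ring_scope.

Section Rayleigh.
Variables (R : realType) (E : finType).
Implicit Types (w : {set E} -> R) (y : E -> R) (S : {set E}).

Definition ymon y S : R := \prod_(e in S) y e.

Definition Zpoly w y : R := \sum_(S : {set E}) w S * ymon y S.

(* Formal partial derivative of the multiaffine polynomial Z w.r.t. y_e:
   Z_e = sum_{S containing e} w(S) y^{S \ e}. *)
Definition Zd w (e : E) y : R :=
  \sum_(S : {set E} | e \in S) w S * ymon y (S :\ e).

(* Second partial derivative Z_{ef} (e <> f):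
   sum_{S containing e and f} w(S) y^{S \ {e,f}}. *)
Definition Zdd w (e f : E) y : R :=
  \sum_(S : {set E} | (e \in S) && (f \in S)) w S * ymon y (S :\: [set e; f]).

Definition DeltaZ w (e f : E) y : R :=
  Zd w e y * Zd w f y - Zdd w e f y * Zpoly w y.

Definition Rayleigh w : Prop :=
  forall e f : E, e != f ->
  forall y : E -> R, (forall c, 0 < y c) -> 0 <= DeltaZ w e f y.

Definition weakly_Rayleigh (Q : {set {set E}}) : Prop :=
  exists w : {set E} -> R,
    [/\ forall S, 0 <= w S,
        exists S, w S != 0,
        forall S, (0 < w S) <-> (S \in Q)
      & Rayleigh w].
End Rayleigh.

Definition symdiff (E : finType) (A B : {set E}) : {set E} :=
  (A :\: B) :|: (B :\: A).

Definition convex_setsys (E : finType) (Q : {set {set E}}) : Prop :=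
  forall S T S' : {set E}, S \in Q -> S' \in Q ->
    S \subset T -> T \subset S' -> T \in Q.

Definition delta_matroid (E : finType) (Q : {set {set E}}) : Prop :=
  forall A B : {set E}, A \in Q -> B \in Q ->
  forall e, e \in symdiff A B ->
    exists2 f, f \in symdiff A B & symdiff A [set e; f] \in Q.

(* Main.v *)
Require Import Defs.
From HB Require Import structures.
From mathcomp Require Import all_boot all_order all_algebra.
From mathcomp Require Import reals.
From mathcomp Require Import zify ring lra.
Set Implicit Arguments. Unset Strict Implicit. Unset Printing Implicit Defensive.
Import Order.TTheory GRing.Theory Num.Theory.
Local Open Scope ring_scope.

Section Proofs.
Variables (R : realType) (E : finType).
Implicit Types (w : {set E} -> R) (y : E -> R) (S : {set E}).

Lemma ymonD1 y S e : e \in S -> ymon y S = y e * ymon y (S :\ e).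
Proof. by move=> eS; rewrite /ymon (big_setD1 _ eS). Qed.

Definition Cl w y (p : pred {set E}) := \sum_(S : {set E} | p S) w S * ymon y S.

Lemma split_ineq w y e f : Rayleigh w -> e != f -> (forall c, 0 < y c) ->
  Cl w y (fun S => (e \notin S) && (f \notin S)) * Cl w y (fun S => (e \in S) && (f \in S))
  <= Cl w y (fun S => (e \in S) && (f \notin S)) * Cl w y (fun S => (f \in S) && (e \notin S)).
Proof.
move=> Ray nef ypos.
have HD := Ray e f nef y ypos.
set a := Cl w y _.
set bb := \sum_(S : {set E} | (e \in S) && (f \notin S)) w S * ymon y (S :\ e).
set cc := \sum_(S : {set E} | (f \in S) && (e \notin S)) w S * ymon y (S :\ f).
set dd := Zdd w e f y.
have Eb : Cl w y (fun S => (e \in S) && (f \notin S)) = y e * bb.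
  rewrite /Cl /bb mulr_sumr; apply: eq_bigr => S /andP [eS _].
  by rewrite (ymonD1 _ eS) mulrCA.
have Ec : Cl w y (fun S => (f \in S) && (e \notin S)) = y f * cc.
  rewrite /Cl /cc mulr_sumr; apply: eq_bigr => S /andP [fS _].
  by rewrite (ymonD1 _ fS) mulrCA.
have Eef S : e \in S -> f \in S -> ymon y S = y e * y f * ymon y (S :\: [set e; f]).
  move=> eS fS; rewrite (ymonD1 _ eS) (ymonD1 y (_ : f \in S :\ e)); last first.
    by rewrite in_setD1 eq_sym nef.
  by rewrite setDDl mulrA.
have Efe S : e \in S -> f \in S -> ymon y (S :\ f) = y e * ymon y (S :\: [set e; f]).
  move=> eS fS; rewrite (ymonD1 y (_ : e \in S :\ f)); last by rewrite in_setD1 nef.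
  by rewrite setDDl setUC.
have Eef' S : e \in S -> f \in S -> ymon y (S :\ e) = y f * ymon y (S :\: [set e; f]).
  move=> eS fS; rewrite (ymonD1 y (_ : f \in S :\ e)); last by rewrite in_setD1 eq_sym nef.
  by rewrite setDDl.
have Ed : Cl w y (fun S => (e \in S) && (f \in S)) = y e * y f * dd.
  rewrite /Cl /dd /Zdd mulr_sumr; apply: eq_bigr => S /andP [eS fS].
  by rewrite (Eef _ eS fS) mulrCA.
have EZ : Zpoly w y = a + y e * bb + y f * cc + y e * y f * dd.
  rewrite -Eb -Ec -Ed /a /Cl /Zpoly (bigID (fun S => e \in S)) /=.
  rewrite (bigID (fun S => f \in S)) /= [X in _ + X](bigID (fun S => f \in S)) /=.
  rewrite [X in _ + (X + _) = _](eq_bigl (fun S => (f \in S) && (e \notin S))); last first.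
    by move=> S; rewrite andbC.
  rewrite /Cl; ring.
have EZe : Zd w e y = bb + y f * dd.
  rewrite /Zd (bigID (fun S => f \in S)) /= addrC /dd /Zdd mulr_sumr; congr (_ + _).
  by apply: eq_bigr => S /andP [eS fS]; rewrite (Eef' _ eS fS) mulrCA.
have EZf : Zd w f y = cc + y e * dd.
  rewrite /Zd (bigID (fun S => e \in S)) /= addrC /dd /Zdd mulr_sumr; congr (_ + _).
  rewrite (eq_bigl (fun S => (e \in S) && (f \in S))); last by move=> S; rewrite andbC.
  by apply: eq_bigr => S /andP [eS fS]; rewrite (Efe _ eS fS) mulrCA.
move: HD; rewrite /DeltaZ EZ EZe EZf Eb Ec Ed -/dd => HD.
have ye := ypos e; have yf := ypos f.
rewrite -subr_ge0.
have -> : y e * bb * (y f * cc) - a * (y e * y f * dd) =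
  (y e * y f) * ((bb + y f * dd) * (cc + y e * dd) - dd * (a + y e * bb + y f * cc + y e * y f * dd)) by ring.
by apply: mulr_ge0 => //; apply: mulr_ge0; apply: ltW.
Qed.

Definition ls (lam : E -> int) (U : {set E}) : int := \sum_(c in U) lam c.

Lemma ymon_exprz (t : R) (lam : E -> int) U : t != 0 ->
  ymon (fun c => t ^ lam c) U = t ^ ls lam U.
Proof.
move=> t0; rewrite /ymon /ls.
symmetry; apply: (big_morph (fun z : int => t ^ z)) => //.
by move=> m n; rewrite expfzDr.
Qed.

Lemma exprz_mono (t : R) (m n : int) : 1 <= t -> m <= n -> t ^ m <= t ^ n.
Proof.
move=> t1 mn.
have t0 : t != 0 by apply: lt0r_neq0; apply: lt_le_trans t1.
have -> : n = m + (n - m) by rewrite addrC subrK.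
rewrite expfzDr //.
have : 0 <= n - m by rewrite subr_ge0.
case: (n - m) => [k|k] // _.
rewrite -exprnP ler_peMr //; first by apply: exprz_ge0; apply: le_trans t1.
exact: exprn_ege1.
Qed.

Lemma single_le (p : pred {set E}) (F : {set E} -> R) U :
  (forall S, 0 <= F S) -> p U -> F U <= \sum_(S | p S) F S.
Proof.
move=> F0 pU; rewrite (bigD1 U) //= lerDl; apply: sumr_ge0 => S _; exact: F0.
Qed.

Lemma part_le (p : pred {set E}) (F : {set E} -> R) :
  (forall S, 0 <= F S) -> \sum_(S | p S) F S <= \sum_S F S.
Proof.
move=> F0; rewrite [X in _ <= X](bigID p) /= lerDl; apply: sumr_ge0 => S _; exact: F0.
Qed.

Lemma trop w (lam : E -> int) e f U0 U1 :
  (forall S, 0 <= w S) -> Rayleigh w -> e != f ->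
  0 < w U0 -> 0 < w U1 -> e \notin U0 -> f \notin U0 -> e \in U1 -> f \in U1 ->
  exists Y, exists Z, [/\ 0 < w Y, 0 < w Z, (e \in Y) && (f \notin Y),
     (f \in Z) && (e \notin Z) & ls lam U0 + ls lam U1 <= ls lam Y + ls lam Z].
Proof.
move=> w0 Ray nef wU0 wU1 eU0 fU0 eU1 fU1.
set L := ls lam U0 + ls lam U1.
case: (boolP [exists Y, [exists Z, [&& 0 < w Y, 0 < w Z, (e \in Y) && (f \notin Y),
     (f \in Z) && (e \notin Z) & L <= ls lam Y + ls lam Z]]]).
  move/existsP => [Y /existsP [Z /and5P [h1 h2 h3 h4 h5]]].
  by exists Y, Z; split.
rewrite negb_exists => /forallP Hn; exfalso.
have Hb : forall Y Z, 0 < w Y -> 0 < w Z -> (e \in Y) && (f \notin Y) ->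
   (f \in Z) && (e \notin Z) -> ls lam Y + ls lam Z <= L - 1.
  move=> Y Z h1 h2 h3 h4; move: (Hn Y); rewrite negb_exists => /forallP /(_ Z).
  rewrite h1 h2 h3 h4 /= -ltNge => h; by rewrite -ltzD1 subrK.
set W := \sum_S w S.
have W0 : 0 <= W by apply: sumr_ge0.
have wp : 0 < w U0 * w U1 by apply: mulr_gt0.
set t : R := 1 + W * W / (w U0 * w U1).
have t1 : 1 <= t by rewrite lerDl; apply: divr_ge0 => //; [apply: mulr_ge0 | apply: ltW].
have tpos : 0 < t by apply: lt_le_trans t1.
have t0 : t != 0 by apply: lt0r_neq0.
set y := fun c => t ^ lam c.
have ypos : forall c, 0 < y c by move=> c; apply: exprz_gt0.
have H := split_ineq Ray nef ypos.
have Clt : forall p, Cl w y p = \sum_(S | p S) w S * t ^ ls lam S.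
  by move=> p; apply: eq_bigr => S _; rewrite /y ymon_exprz.
rewrite !Clt in H.
set T := t ^ (L - 1).
have Tpos : 0 < T by apply: exprz_gt0.
have HL : t ^ L = t * T by rewrite /T -{1}(subrK 1 L) expfzDr // expr1z mulrC.
have lower : w U0 * w U1 * t * T <=
   (\sum_(S : {set E} | (e \notin S) && (f \notin S)) w S * t ^ ls lam S) *
   (\sum_(S : {set E} | (e \in S) && (f \in S)) w S * t ^ ls lam S).
  have -> : w U0 * w U1 * t * T = (w U0 * t ^ ls lam U0) * (w U1 * t ^ ls lam U1).
    by rewrite -mulrA -HL /L expfzDr //; ring.
  apply: ler_pM.
  - by apply: mulr_ge0 => //; apply: exprz_ge0; apply: ltW.
  - by apply: mulr_ge0 => //; apply: exprz_ge0; apply: ltW.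
  - apply: (@single_le (fun S => (e \notin S) && (f \notin S)) (fun S => w S * t ^ ls lam S) U0); last by rewrite eU0 fU0.
    by move=> S; apply: mulr_ge0 => //; apply: exprz_ge0; apply: ltW.
  - apply: (@single_le (fun S => (e \in S) && (f \in S)) (fun S => w S * t ^ ls lam S) U1); last by rewrite eU1 fU1.
    by move=> S; apply: mulr_ge0 => //; apply: exprz_ge0; apply: ltW.
have upper : (\sum_(S : {set E} | (e \in S) && (f \notin S)) w S * t ^ ls lam S) *
   (\sum_(S : {set E} | (f \in S) && (e \notin S)) w S * t ^ ls lam S) <= W * W * T.
  rewrite big_distrlr /=.
  apply: (@le_trans _ _ (\sum_(Y : {set E} | (e \in Y) && (f \notin Y))
                         \sum_(Z : {set E} | (f \in Z) && (e \notin Z)) w Y * w Z * T)).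
    apply: ler_sum => Y hY; apply: ler_sum => Z hZ.
    have [wY|wY] := boolP (0 < w Y); last first.
      have -> : w Y = 0 by apply/eqP; rewrite eq_le w0 andbT leNgt.
      by rewrite !mul0r.
    have [wZ|wZ] := boolP (0 < w Z); last first.
      have -> : w Z = 0 by apply/eqP; rewrite eq_le w0 andbT leNgt.
      by rewrite !(mul0r, mulr0).
    rewrite mulrACA -expfzDr // ler_pM2l; last by apply: mulr_gt0.
    by apply: exprz_mono => //; apply: Hb.
  under eq_bigr do rewrite -mulr_suml.
  rewrite -mulr_suml; apply: ler_wpM2r; first exact: ltW.
  rewrite -big_distrlr /=; apply: ler_pM => //; try by apply: sumr_ge0.
    exact: part_le.
  exact: part_le.
have := le_trans lower (le_trans H upper).
rewrite ler_pM2r // /t mulrDr mulr1 mulrCA divff ?mulr1; last exact: lt0r_neq0.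
by rewrite gerDr leNgt wp.
Qed.


Definition lamPJ (P J : {set E}) (c : E) : int :=
  if c \in P then 1 else if c \in J then 0 else -1.

Lemma sum_ind (A B : {set E}) : \sum_(c in A) ((c \in B) : int) = #|A :&: B|%:Z.
Proof.
rewrite (eq_bigr (fun c => if c \in B then 1 else 0)); last by move=> c _; case: (c \in B).
rewrite -big_mkcondr /= (eq_bigl (fun c => c \in A :&: B)); last by move=> c; rewrite in_setI.
by rewrite sumr_const natz.
Qed.

Lemma lsE (P J U : {set E}) : P \subset J ->
  ls (lamPJ P J) U = #|P|%:Z - #|P :\: U|%:Z - #|U :\: J|%:Z.
Proof.
move=> PJ.
rewrite /ls (eq_bigr (fun c => ((c \in P) : int) - ((c \in ~: J) : int))); last first.
  move=> c _; rewrite /lamPJ in_setC; case: (boolP (c \in P)) => cP.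
    by rewrite (subsetP PJ _ cP).
  by case: (c \in J).
rewrite sumrB !sum_ind setIC -setDE -(cardsID U P) PoszD.
by rewrite addrK.
Qed.

Lemma ls_le (P J U : {set E}) : P \subset J -> ls (lamPJ P J) U <= #|P|%:Z.
Proof.
move=> PJ; rewrite lsE // -addrA gerDl -opprD oppr_le0 -PoszD //.
Qed.

Lemma ls_eq (P J U : {set E}) : P \subset J -> ls (lamPJ P J) U = #|P|%:Z ->
  (P \subset U) && (U \subset J).
Proof.
move=> PJ; rewrite lsE // -addrA -[X in _ = X]addr0 => /addrI /eqP.
rewrite -opprD oppr_eq0 -PoszD => /eqP [] /eqP.
by rewrite addn_eq0 !cards_eq0 !setD_eq0.
Qed.

Lemma ls_in (P J U : {set E}) : P \subset U -> U \subset J -> ls (lamPJ P J) U = #|P|%:Z.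
Proof.
move=> PU UJ; rewrite lsE ?(subset_trans PU UJ) //.
move: PU UJ; rewrite -!setD_eq0 => /eqP -> /eqP ->.
by rewrite cards0 !subr0.
Qed.


Lemma int_aux (a b p q : int) : a <= p -> b <= p -> p + p - 1 <= q -> q <= a + b ->
  (a == p) || (b == p).
Proof.
move=> h1 h2 h3 h4; case: (boolP (a == p)) => //= /eqP ha; apply/eqP; lia.
Qed.

Lemma card_lt (A B : {set E}) x : A \subset B -> x \in B -> x \notin A -> (#|A| < #|B|)%N.
Proof. by move=> AB xB xA; apply: proper_card; apply/properP; split => //; exists x. Qed.

Lemma symdiffK (A B : {set E}) : symdiff A (symdiff A B) = B.
Proof. by apply/setP => x; rewrite /symdiff !inE; case: (x \in A); case: (x \in B). Qed.

Lemma symdiff_sub (A B B' : {set E}) : A :&: B \subset B' -> B' \subset A :|: B ->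
  symdiff A B' \subset symdiff A B.
Proof.
move=> h1 h2; apply/subsetP => x; move: (subsetP h1 x) (subsetP h2 x).
rewrite /symdiff !inE; case: (x \in A); case: (x \in B); case: (x \in B') => //=.
all: try by move=> /(_ isT).
all: by move=> _ /(_ isT).
Qed.

Lemma inSD x (A B : {set E}) : (x \in symdiff A B) = ((x \in A) != (x \in B)).
Proof. by rewrite /symdiff !inE; case: (x \in A); case: (x \in B). Qed.

Lemma aux3 (p : int) (k : nat) : (k <= 1)%N -> p + p - 1 <= p - k%:Z + p.
Proof. move=> h; lia. Qed.

Lemma aux4 (p : int) (k : nat) : (k <= 1)%N -> p + p - 1 <= p + (p - k%:Z).
Proof. move=> h; lia. Qed.

Lemma two_eq (a b p : int) : a <= p -> b <= p -> p + p <= a + b -> a = p.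
Proof.
move=> h1 h2 h3; apply/eqP; rewrite eq_le h1 /=.
by rewrite -(lerD2r b) (le_trans _ h3) // lerD2l.
Qed.

Section Comb.
Variables (w : {set E} -> R) (Q : {set {set E}}).
Hypotheses (w0 : forall S, 0 <= w S) (hQ : forall S, (0 < w S) <-> (S \in Q))
  (Ray : Rayleigh w).

Lemma Wlem (P J U0 U1 : {set E}) e f : e != f ->
  U0 \in Q -> U1 \in Q -> e \notin U0 -> f \notin U0 -> e \in U1 -> f \in U1 ->
  exists Y, exists Z, [/\ Y \in Q, Z \in Q, (e \in Y) && (f \notin Y),
     (f \in Z) && (e \notin Z) &
     ls (lamPJ P J) U0 + ls (lamPJ P J) U1 <= ls (lamPJ P J) Y + ls (lamPJ P J) Z].
Proof.
move=> nef /hQ q0 /hQ q1 eU0 fU0 eU1 fU1.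
have [Y [Z [h1 h2 h3 h4 h5]]] := trop (lamPJ P J) w0 Ray nef q0 q1 eU0 fU0 eU1 fU1.
by exists Y, Z; split => //; apply/hQ.
Qed.

Lemma convex_aux n : forall S S' T : {set E}, (#|S' :\: S| <= n)%N -> S \in Q -> S' \in Q ->
  S \subset T -> T \subset S' -> T \in Q.
Proof.
elim: n => [|n IH] S S' T.
  rewrite leqn0 cards_eq0 setD_eq0 => h SQ _ ST TS'.
  suff -> : T = S by [].
  by apply/eqP; rewrite eqEsubset ST andbT (subset_trans TS' h).
move=> hc SQ S'Q ST TS'.
case: (boolP (T == S)) => [/eqP -> //|TnS].
case: (boolP (T == S')) => [/eqP -> //|TnS'].
have /subsetPn [e eT eS] : ~~ (T \subset S).
  by apply: contra TnS => TS; rewrite eqEsubset TS ST.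
have /subsetPn [f fS' fT] : ~~ (S' \subset T).
  by apply: contra TnS' => h; rewrite eqEsubset h TS'.
have nef : e != f by apply: contraNneq fT => <-.
have fS : f \notin S by apply: contra fT; apply: (subsetP ST).
have eS' : e \in S' by apply: (subsetP TS').
have SS' := subset_trans ST TS'.
have [Y [Z [YQ ZQ /andP [eY fY] _ hl]]] :=
  Wlem S S' nef SQ S'Q eS fS eS' fS'.
rewrite (ls_in (subxx S) SS') (ls_in SS' (subxx S')) in hl.
have hY : ls (lamPJ S S') Y = #|S|%:Z.
  have := ls_le Y SS'; have := ls_le Z SS' => h2 h1.
  apply/eqP; rewrite eq_le h1 /=.
  by rewrite -(lerD2r (ls (lamPJ S S') Z)) (le_trans _ hl) // lerD2l.
have /andP [SY YS'] := ls_eq SS' hY.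
have c1 : (#|Y :\: S| <= n)%N.
  rewrite -ltnS; apply: leq_trans hc; apply: (@card_lt _ _ f).
  - by apply: setSD.
  - by rewrite inE fS fS'.
  - by rewrite !inE (negbTE fY) andbF.
have c2 : (#|S' :\: Y| <= n)%N.
  rewrite -ltnS; apply: leq_trans hc; apply: (@card_lt _ _ e).
  - by apply: setDS.
  - by rewrite inE eS eS'.
  - by rewrite !inE eY.
have TYQ : T :&: Y \in Q.
  by apply: (IH S Y) => //; rewrite ?subsetI ?ST ?SY ?subsetIr.
have TUYQ : T :|: Y \in Q.
  by apply: (IH Y S') => //; rewrite ?subsetUr ?subUset ?TS' ?YS'.
apply: (IH (T :&: Y) (T :|: Y)) => //; last first.
- by rewrite subsetUl.
- by rewrite subsetIl.
rewrite -ltnS; apply: leq_trans hc; apply: (@card_lt _ _ e).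
- apply/subsetP => x; rewrite !inE => /andP [h1 h2].
  case/orP: h2 => h2.
    rewrite (subsetP TS' _ h2) andbT; apply: contra h1 => xS.
    by rewrite (subsetP ST _ xS) (subsetP SY _ xS).
  rewrite (subsetP YS' _ h2) andbT; apply: contra h1 => xS.
  by rewrite (subsetP ST _ xS) (subsetP SY _ xS).
- by rewrite inE eS eS'.
- by rewrite !inE eT eY.
Qed.


Lemma dm_aux (A : {set E}) e n : A \in Q -> forall B, (#|symdiff A B| <= n)%N -> B \in Q ->
  e \in symdiff A B -> exists2 f, f \in symdiff A B & symdiff A [set e; f] \in Q.
Proof.
move=> AQ; elim: n => [|n IH] B.
  by rewrite leqn0 cards_eq0 => /eqP -> _; rewrite inE.
move=> hc BQ eD.
case: (boolP [exists B', [&& B' \in Q, B' != B, A :&: B \subset B', B' \subset A :|: B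
    & e \in symdiff A B']]).
  move/existsP => [B' /and5P [B'Q nB' h1 h2 eD']].
  have sub := symdiff_sub h1 h2.
  have lt : (#|symdiff A B'| < #|symdiff A B|)%N.
    apply: proper_card; rewrite properEneq sub andbT.
    by apply: contra nB' => /eqP h; rewrite -(symdiffK A B') h symdiffK.
  have [f fD' fQ] := IH B' (leq_trans lt hc) B'Q eD'.
  by exists f => //; apply: (subsetP sub).
rewrite negb_exists => /forallP Hn.
have H : forall B', B' \in Q -> A :&: B \subset B' -> B' \subset A :|: B ->
    e \in symdiff A B' -> B' = B.
  move=> B' h0 h1 h2 h3; apply/eqP; move: (Hn B'); rewrite h0 h1 h2 h3 /=.
  by rewrite andbT negbK.
have PJ : A :&: B \subset A :|: B by apply: subset_trans (subsetIl A B) (subsetUl A B).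
case: (boolP [exists f, [&& f \in symdiff A B, f != e & (f \in A) == (e \in A)]]).
  move/existsP => [f /and3P [fD nfe /eqP fAeA]]; exfalso.
  have nef : e != f by rewrite eq_sym.
  rewrite inSD in eD; rewrite inSD in fD.
  case eA: (e \in A) in fAeA eD.
  - have fA : f \in A by rewrite fAeA.
    have eB : e \notin B by move: eD; case: (e \in B).
    have fB : f \notin B by move: fD; rewrite fA; case: (f \in B).
    have [Y [Z [_ ZQ _ /andP [fZ eZ] hl]]] :=
      Wlem (A :&: B) (A :|: B) nef BQ AQ eB fB eA fA.
    rewrite (ls_in (subsetIr A B) (subsetUr A B)) (ls_in (subsetIl A B) (subsetUl A B)) in hl.
    have hZ : ls (lamPJ (A :&: B) (A :|: B)) Z = #|A :&: B|%:Z.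
      by apply: (two_eq (ls_le Z PJ) (ls_le Y PJ)); rewrite [X in _ <= X]addrC.
    have /andP [h1 h2] := ls_eq PJ hZ.
    have := H Z ZQ h1 h2; rewrite inSD eA (negbTE eZ) => /(_ isT) ZB.
    by move: fZ; rewrite ZB (negbTE fB).
  - have fA : f \notin A by rewrite fAeA.
    have eB : e \in B by move: eD; case: (e \in B).
    have fB : f \in B by move: fD; rewrite (negbTE fA); case: (f \in B).
    have eA' : e \notin A by rewrite eA.
    have [Y [Z [YQ _ /andP [eY fY] _ hl]]] :=
      Wlem (A :&: B) (A :|: B) nef AQ BQ eA' fA eB fB.
    rewrite (ls_in (subsetIr A B) (subsetUr A B)) (ls_in (subsetIl A B) (subsetUl A B)) in hl.
    have hY : ls (lamPJ (A :&: B) (A :|: B)) Y = #|A :&: B|%:Z.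
      by apply: (two_eq (ls_le Y PJ) (ls_le Z PJ)).
    have /andP [h1 h2] := ls_eq PJ hY.
    have := H Y YQ h1 h2; rewrite inSD eA eY => /(_ isT) YB.
    by move: fY; rewrite YB fB.
rewrite negb_exists => /forallP Hn2.
have C2 : forall f, f \in symdiff A B -> f != e -> (f \in A) = ~~ (e \in A).
  move=> f h1 h2; move: (Hn2 f); rewrite h1 h2 /=.
  by case: (f \in A); case: (e \in A).
case: (boolP [exists f, [exists g, [&& f \in symdiff A B, g \in symdiff A B, f != e,
    g != e & f != g]]]).
  move/existsP => [f /existsP [g /and5P [fD gD nfe nge nfg]]]; exfalso.
  have fA := C2 f fD nfe; have gA := C2 g gD nge.
  have eD' := eD; rewrite inSD in eD'.
  rewrite inSD in fD; rewrite inSD in gD.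
  case eA: (e \in A) in fA gA eD'.
  - have eB : e \notin B by move: eD'; case: (e \in B).
    have fB : f \in B by move: fD; rewrite fA; case: (f \in B).
    have gB : g \in B by move: gD; rewrite gA; case: (g \in B).
    have fA' : f \notin A by rewrite fA.
    have gA' : g \notin A by rewrite gA.
    have PJ' : A :&: B \subset B by apply: subsetIr.
    have AB1 : (#|A :\: B| <= 1)%N.
      rewrite -(cards1 e); apply: subset_leq_card; apply/subsetP => x.
      rewrite !inE => /andP [xB xA]; case: (boolP (x == e)) => // nxe.
      have xD : x \in symdiff A B by rewrite inSD xA (negbTE xB).
      by move: (C2 x xD nxe); rewrite xA eA.
    have [Y [Z [YQ ZQ /andP [fY gY] /andP [gZ fZ] hl]]] :=
      Wlem (A :&: B) B nfg AQ BQ fA' gA' fB gB.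
    rewrite (ls_in PJ' (subxx B)) (lsE _ PJ') in hl.
    have key : forall X, X \in Q -> ls (lamPJ (A :&: B) B) X = #|A :&: B|%:Z ->
        (f \notin X) || (g \notin X) -> False.
      move=> X XQ hX hfg; have /andP [h1 h2] := ls_eq PJ' hX.
      have h2' : X \subset A :|: B by apply: subset_trans h2 (subsetUr A B).
      have eX : e \notin X by apply: contra eB; apply: (subsetP h2).
      have := H X XQ h1 h2'; rewrite inSD eA (negbTE eX) => /(_ isT) XB.
      by move: hfg; rewrite XB fB gB.
    have h0 : #|(A :&: B) :\: A| = 0%N.
      by apply/eqP; rewrite cards_eq0 setD_eq0 subsetIl.
    rewrite h0 subr0 in hl.
    have := int_aux (ls_le Y PJ') (ls_le Z PJ') (aux3 _ AB1) hl.
    case/orP => /eqP h.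
      by apply: (key Y YQ h); rewrite gY orbT.
    by apply: (key Z ZQ h); rewrite fZ.
  - have eB : e \in B by move: eD'; case: (e \in B).
    have fA' : f \in A by rewrite fA.
    have gA' : g \in A by rewrite gA.
    have fB : f \notin B by move: fD; rewrite fA'; case: (f \in B).
    have gB : g \notin B by move: gD; rewrite gA'; case: (g \in B).
    have PJ' : B \subset A :|: B by apply: subsetUr.
    have BA1 : (#|B :\: A| <= 1)%N.
      rewrite -(cards1 e); apply: subset_leq_card; apply/subsetP => x.
      rewrite !inE => /andP [xA xB]; case: (boolP (x == e)) => // nxe.
      have xD : x \in symdiff A B by rewrite inSD xB (negbTE xA).
      by move: (C2 x xD nxe); rewrite (negbTE xA) eA.
    have [Y [Z [YQ ZQ /andP [fY gY] /andP [gZ fZ] hl]]] :=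
      Wlem B (A :|: B) nfg BQ AQ fB gB fA' gA'.
    rewrite (ls_in (subxx B) PJ') (lsE _ PJ') in hl.
    have key : forall X, X \in Q -> ls (lamPJ B (A :|: B)) X = #|B|%:Z ->
        (f \in X) || (g \in X) -> False.
      move=> X XQ hX hfg; have /andP [h1 h2] := ls_eq PJ' hX.
      have h1' : A :&: B \subset X by apply: subset_trans (subsetIr A B) h1.
      have eX : e \in X by apply: (subsetP h1).
      have := H X XQ h1' h2; rewrite inSD eA eX => /(_ isT) XB.
      by move: hfg; rewrite XB (negbTE fB) (negbTE gB).
    have h0 : #|A :\: (A :|: B)| = 0%N.
      by apply/eqP; rewrite cards_eq0 setD_eq0 subsetUl.
    rewrite h0 subr0 in hl.
    have := int_aux (ls_le Y PJ') (ls_le Z PJ') (aux4 _ BA1) hl.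
    case/orP => /eqP h.
      by apply: (key Y YQ h); rewrite fY.
    by apply: (key Z ZQ h); rewrite gZ orbT.
rewrite negb_exists => /forallP Hn3.
have U : forall f g, f \in symdiff A B -> g \in symdiff A B -> f != e -> g != e -> f = g.
  move=> f g h1 h2 h3 h4; move: (Hn3 f); rewrite negb_exists => /forallP /(_ g).
  by rewrite h1 h2 h3 h4 /= negbK => /eqP.
case: (boolP [exists g, (g \in symdiff A B) && (g != e)]).
  move/existsP => [g /andP [gD nge]]; exists g => //.
  have -> : [set e; g] = symdiff A B.
    apply/setP => x; rewrite in_set2; case: (boolP (x == e)) => [/eqP -> | nxe] /=.
      by rewrite eD.
    case: (boolP (x \in symdiff A B)) => xD.
      by rewrite (U x g xD gD nxe nge) eqxx.
    by apply/negbTE; apply: contraNneq xD => ->.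
  by rewrite symdiffK.
rewrite negb_exists => /forallP Hn4; exists e => //.
have -> : [set e; e] = symdiff A B.
  apply/setP => x; rewrite in_set2 orbb; case: (boolP (x == e)) => [/eqP -> | nxe] /=.
    by rewrite eD.
  by move: (Hn4 x); rewrite nxe andbT => /negbTE.
by rewrite symdiffK.
Qed.

End Comb.

End Proofs.

Theorem theorem4p6 (R : realType) (E : finType) (Q : {set {set E}}) :
  weakly_Rayleigh R Q -> convex_setsys Q /\ delta_matroid Q.
Proof.
case=> w [w0 _ hQ Ray]; split.
- move=> S T S' SQ S'Q ST TS'.
  exact: (convex_aux w0 hQ Ray (leqnn _) SQ S'Q ST TS').
- move=> A B AQ BQ e eD.
  exact: (dm_aux w0 hQ Ray AQ (leqnn _) BQ eD).
Qed.
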